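(* For every graph $G$, $\rho_{\widehat{T}}(G)=\Theta(G)$.
   Context: Graphs are finite and simple. A graph $G=(V,E)$ is a threshold graph if there exist real weights $w:V\to\mathbb{R}$ and a real number $s$ such that for all distinct $i,j\in V$: $w(i)+w(j)\ge s$ if and only if $ij\in E$. The threshold dimension $\Theta(G)$ of $G=(V,E)$ is the least $k\ge 1$ such that there exist threshold graphs $(V,E_1),\dots,(V,E_k)$ with each $E_i\subseteq E$ and $E_1\cup\dots\cup E_k=E$. For $u,v\in(\mathbb{R}\cup\{-\infty\})^k$ the max-plus tropical dot product is $u\,\widehat{\odot}\,v=\max_i(u_i+v_i)$. A max-plus $k$-tropical dot product representation of $G$ is a map $f:V\to(\mathbb{R}\cup\{-\infty\})^k$ with a threshold $t>0$ such that for all distinct $x,y\in V$: $xy\in E$ iff $f(x)\,\widehat{\odot}\,f(y)\ge t$. $\rho_{\widehat T}(G)$ is the least $k\ge 1$ for which such a representation exists. *)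

(* Defs.v *)
From HB Require Import structures.
From mathcomp Require Import all_boot all_order all_algebra.
From mathcomp Require Import boolp reals constructive_ereal ereal Rstruct.

Set Implicit Arguments.
Unset Strict Implicit.
Unset Printing Implicit Defensive.

Import Order.TTheory GRing.Theory Num.Theory.
Local Open Scope ring_scope.

Notation RR := Rdefinitions.R.

(* A finite simple graph: vertex set a finType T, edge relation e symmetric
   and irreflexive (these are hypotheses of the theorem). *)

Definition threshold_graph (T : finType) (E : rel T) : Prop :=
  exists (w : T -> RR) (s : RR),
    forall i j : T, i != j -> ((s <= w i + w j) <-> E i j).

Definition threshold_cover (T : finType) (e : rel T) (k : nat) : Prop :=
  exists Es : 'I_k -> rel T,
    (forall i, symmetric (Es i) /\ irreflexive (Es i)) /\
    (forall i, threshold_graph (Es i)) /\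
    (forall i x y, Es i x y -> e x y) /\
    (forall x y, e x y -> exists i, Es i x y).

Definition tdot (k : nat) (u v : 'I_k -> \bar RR) : \bar RR :=
  \big[Order.max/-oo%E]_(i < k) (u i + v i)%E.

Definition tropical_rep (T : finType) (e : rel T) (k : nat) : Prop :=
  exists (f : T -> 'I_k -> \bar RR) (t : RR),
    (forall x i, f x i != +oo%E) /\ 0 < t /\
    forall x y : T, x != y -> (e x y <-> (t%:E <= tdot (f x) (f y))%E).

Definition least_pos (P : nat -> Prop) (n : nat) : Prop :=
  (1 <= n)%N /\ P n /\ forall m, (1 <= m)%N -> P m -> (n <= m)%N.

Definition threshold_dim_is (T : finType) (e : rel T) (n : nat) : Prop :=
  least_pos (threshold_cover e) n.

Definition tropical_dim_is (T : finType) (e : rel T) (n : nat) : Prop :=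
  least_pos (tropical_rep e) n.

(* Main.v *)
Require Import Defs.
From mathcomp Require Import all_boot.
From HB Require Import structures.
From mathcomp Require Import all_order all_algebra.
From mathcomp Require Import boolp reals constructive_ereal ereal Rstruct.
From mathcomp Require Import lra.
Import Order.TTheory GRing.Theory Num.Theory.
Local Open Scope ring_scope.

Lemma tdot_ge k (u v : 'I_k -> \bar RR) i : (u i + v i <= tdot u v)%E.
Proof. exact: le_bigmax. Qed.

Lemma tdot_sup k (u v : 'I_k -> \bar RR) i t :
  (t <= u i + v i)%E -> (t <= tdot u v)%E.
Proof. by move=> H; apply: (bigmax_sup i). Qed.

Lemma tdot_geP k (u v : 'I_k -> \bar RR) (t : RR) :
  (t%:E <= tdot u v)%E -> exists i, (t%:E <= u i + v i)%E.
Proof.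
move=> H; apply: contrapT => /forallNP Hn.
have : (tdot u v < t%:E)%E.
  apply/bigmax_ltP; split => [|i _]; first exact: ltNyr.
  by rewrite ltNge; apply/negP => /Hn.
by rewrite ltNge H.
Qed.

Lemma least_exists (P : nat -> Prop) :
  (exists m, (1 <= m)%N /\ P m) -> exists n, least_pos P n.
Proof.
move=> H.
have H' : exists m, `[< (1 <= m)%N /\ P m >].
  by case: H => m Hm; exists m; apply/asboolP.
case: (ex_minnP H') => n /asboolP [h1 h2] hmin.
exists n; split => //; split => // m h1m hPm; apply: hmin; apply/asboolP; by split.
Qed.

Section Main.
Variables (T : finType) (e : rel T).
Hypotheses (e_sym : symmetric e) (e_irr : irreflexive e).

Lemma cover_rep k : threshold_cover e k -> tropical_rep e k.
Proof.
case=> Es [Hsi [Hth [Hsub Hcov]]].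
have Hth' : forall i, exists p : (T -> RR) * RR,
    forall a b, a != b -> ((p.2 <= p.1 a + p.1 b) <-> Es i a b).
  by move=> i; case: (Hth i) => w [s Hw]; exists (w, s).
case: (choice Hth') => p Hp.
exists (fun x i => ((p i).1 x - (p i).2 / 2 + 1 / 2)%:E), 1.
split => // ; split => // x y nxy; split.
- move=> exy; case: (Hcov x y exy) => i Hi.
  have := (Hp i x y nxy).2 Hi => H.
  apply: (@tdot_sup _ _ _ (i)).
  rewrite -EFinD lee_fin; lra.
- move/tdot_geP => [i]; rewrite -EFinD lee_fin => H.
  apply: (Hsub i); apply/(Hp i x y nxy); lra.
Qed.

Lemma rep_cover k : tropical_rep e k -> threshold_cover e k.
Proof.
case=> f [t [Hf [t0 Hrep]]].
pose S i := \sum_(z : T) `|fine (f z i)|.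
pose M i := S i + `|t| + 1.
pose w i z := if f z i is r%:E then r else - M i.
pose Es i := [rel x y | (x != y) && (t%:E <= f x i + f y i)%E].
have S0 i : 0 <= S i by apply: sumr_ge0 => z _; exact: normr_ge0.
have wle i z : w i z <= S i.
  rewrite /w; case hz: (f z i) => [r| |].
  - rewrite /S (bigD1 z) //= hz /=.
    have := ler_norm r; have : 0 <= \sum_(j | j != z) `|fine (f j i)| 
      by apply: sumr_ge0 => j _; exact: normr_ge0.
    lra.
  - by have := Hf z i; rewrite hz.
  - rewrite /M; have := normr_ge0 t; have := S0 i; lra.
have tb : - `|t| <= t by have := ler_norm (-t); rewrite normrN; lra.
have key i x y : (t <= w i x + w i y) <-> (t%:E <= f x i + f y i)%E.
  have := wle i x; have := wle i y; have := S0 i.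
  rewrite /w; case hx: (f x i) => [rx| |]; case hy: (f y i) => [ry| |].
  - by rewrite -EFinD lee_fin.
  - by have := Hf y i; rewrite hy.
  - move=> *; rewrite /= leeNy_eq /=; split => // H; exfalso; move: H.
    rewrite /M; lra.
  - by have := Hf x i; rewrite hx.
  - by have := Hf x i; rewrite hx.
  - by have := Hf x i; rewrite hx.
  - move=> *; rewrite /= leeNy_eq /=; split => // H; exfalso; move: H.
    rewrite /M; lra.
  - by have := Hf y i; rewrite hy.
  - move=> *; rewrite /= leeNy_eq /=; split => // H; exfalso; move: H.
    rewrite /M; have := S0 i; have := normr_ge0 t; lra.
exists Es; split; [|split; [|split]].
- move=> i; split; first by move=> x y; rewrite /Es /= eq_sym addeC.
  by move=> x; rewrite /Es /= eqxx.
- move=> i; exists (w i), t => a b nab; rewrite /Es /= nab /=; exact: key.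
- move=> i x y /andP [nxy H]; apply/(Hrep x y nxy).
  exact: (@tdot_sup _ _ _ (i)).
- move=> x y exy.
  case: (eqVneq x y) => [xy|nxy]; first by rewrite xy e_irr in exy.
  case: (@tdot_geP _ _ _ _ ((Hrep x y nxy).1 exy)) => i Hi.
  by exists i; rewrite /Es /= nxy.
Qed.

Lemma rank_eq (x y : T) : (enum_rank x : nat) = enum_rank y -> x = y.
Proof. by move=> /val_inj /enum_rank_inj. Qed.

Lemma rep_exists : tropical_rep e #|T|.+1.
Proof.
pose f (x : T) (i : 'I_#|T|.+1) : \bar RR :=
  if (enum_rank x == i :> nat) then 1%:E
  else if [exists v, (enum_rank v == i :> nat) && e x v] then 0%:E else -oo%E.
exists f, 1; split; first by move=> x i; rewrite /f; case: ifP => //; case: ifP.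
split => // x y nxy; split.
- move=> exy; apply: (@tdot_sup _ _ _ (widen_ord (leqnSn #|T|) (enum_rank x))).
  rewrite /f /= eqxx.
  have -> : (enum_rank y == enum_rank x :> nat) = false.
    by apply/negP => /eqP /rank_eq yx; move: nxy; rewrite yx eqxx.
  have -> : [exists v, (enum_rank v == enum_rank x :> nat) && e y v].
    by apply/existsP; exists x; rewrite eqxx e_sym.
  by rewrite -EFinD lee_fin addr0.
- move/tdot_geP => [i]; rewrite /f.
  case hx: (enum_rank x == i :> nat); case hy: (enum_rank y == i :> nat).
  + by move: nxy; rewrite (rank_eq _ _ (etrans (eqP hx) (esym (eqP hy)))) eqxx.
  + case: ifP => [/existsP [v /andP [hv ev]] _|_].
      by move: ev; rewrite (rank_eq _ _ (etrans (eqP hv) (esym (eqP hx)))) e_sym.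
    by rewrite /= leeNy_eq.
  + case: ifP => [/existsP [v /andP [hv ev]] _|_].
      by move: ev; rewrite (rank_eq _ _ (etrans (eqP hv) (esym (eqP hy)))).
    by rewrite /= leeNy_eq.
  + case: ifP => _; case: ifP => _; rewrite ?addeNy ?addNye ?leeNy_eq //.
    by rewrite -EFinD lee_fin addr0 ler10.
Qed.

End Main.

Theorem mainTheorem6 (T : finType) (e : rel T)
    (e_sym : symmetric e) (e_irr : irreflexive e) :
  exists n : nat, threshold_dim_is e n /\ tropical_dim_is e n.
Proof.
have [n [h1 [h2 h3]]] : exists n, tropical_dim_is e n.
  apply: least_exists; exists #|T|.+1; split => //; exact: rep_exists.
exists n; split; last by [].
split => //; split; first exact: rep_cover.
by move=> m hm /cover_rep hc; apply: h3.
Qed.
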